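(* Let $D_1$ and $D_2$ be two different subsets of $MB_Y$, each of which is a set of fair causal features (i.e. a feasible solution of the fair causal feature selection problem described in the context). Then $D_1 \cup D_2$ is again a causally fair solution, i.e. the predictor $Y'$ obtained by training a classifier on $D_1 \cup D_2$ is causally fair with respect to the sensitive variable $S$.
   Context: Setting: a dataset over a finite set of random variables $V = \{S\} \cup X \cup \{Y\}$, where $S$ is the sensitive variable, $X = \{X_1,\dots,X_n\}$ the non-sensitive features and $Y$ the class (label) variable. The joint distribution $P(V)$ together with a directed acyclic graph $G$ on $V$ forms a Bayesian network (each variable is independent of its non-descendants given its parents) that is faithful (a conditional independence holds in $P$ iff the corresponding d-separation holds in $G$). The Markov blanket $MB_W$ of a variable $W$ is the set of its parents, children, and the other parents of its children in $G$; $MB_Y \subseteq X$ and $MB_S$ denote the Markov blankets of $Y$ and $S$. Intervention $do(W=w)$ means setting $W$ to $w$ in the modified graph obtained from $G$ by deleting all edges into $W$. Classifier training on a feature set $T \subseteq V$ produces a new variable $Y'$ added to the causal graph as a child of all features in $T$, generated by the mechanism $P(Y' \mid T)$ derived from the observational distribution $P$. Causal (interventional) fairness: for a set $K \subseteq V \setminus \{S, Y'\}$, the predictor is $K$-fair if for every value $k$ of $K$ and every outcome $o$, $\Pr(Y'=o \mid do(S=0), do(K=k)) = \Pr(Y'=o \mid do(S=1), do(K=k))$; it is causally fair if it is $K$-fair for every such $K$ (graphically, $S$ is d-separated from $Y'$ given $K$ in the graph where the edges from $S$ into $K$ are removed). A set $T$ is a set of fair causal features if the predictor $Y'$ trained on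 $T$ is causally fair and $T \subseteq MB_Y$ (so its features have an explainable causal relation with $Y$). The fair causal feature selection problem asks for the largest subset $T \subseteq MB_Y$ that is a set of fair causal features. *)

(* Defs.v *)
From mathcomp Require Import all_boot.
Set Implicit Arguments. Unset Strict Implicit. Unset Printing Implicit Defensive.

Section Graphs.
Variable U : finType.

(* A directed graph on U: [e x y] means there is an edge x -> y. *)
Definition acyclic (e : rel U) : Prop := forall x y, e x y -> ~~ connect e y x.

Definition descendant (e : rel U) (x y : U) : bool := connect e x y.

Definition adjacent (e : rel U) (a b : U) : bool := e a b || e b a.

Definition active_at (e : rel U) (Z : {set U}) (a v b : U) : bool :=
  if e a v && e b v
  then [exists z in Z, descendant e v z]   (* collider: v or a descendant in Z *)
  else v \notin Z.                         (* non-collider: v not in Z *)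

Fixpoint active_interior (e : rel U) (Z : {set U}) (a : U) (s : seq U) : bool :=
  match s with
  | v :: ((b :: _) as s') => active_at e Z a v b && active_interior e Z v s'
  | _ => true
  end.

Definition d_connecting (e : rel U) (Z : {set U}) (x : U) (p : seq U) : bool :=
  [&& path (adjacent e) x p, uniq (x :: p) & active_interior e Z x p].

Definition d_separated (e : rel U) (x y : U) (Z : {set U}) : Prop :=
  forall p : seq U, last x p = y -> ~~ d_connecting e Z x p.
End Graphs.

Section Causal.
Variable V : finType.

Definition markov_blanket (G : rel V) (W : V) : {set V} :=
  [set x | (x != W) && [|| G x W, G W x | [exists c, G W c && G x c]]].

(* The causal graph extended with the predictor Y' (= None) as a child of
   every feature in T. Vertices: Some v for v in V, and None for Y'. *)
Definition with_predictor (G : rel V) (T : {set V}) : rel (option V) :=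
  fun a b => match a, b with
             | Some x, Some y => G x y
             | Some x, None => x \in T
             | _, _ => false
             end.

Definition cut_S_into_K (e : rel (option V)) (S : V) (K : {set V}) : rel (option V) :=
  fun a b => e a b && ~~ ((a == Some S) && [exists k in K, b == Some k]).

(* K-fairness (graphical criterion of the paper): S is d-separated from Y'
   given K in the extended graph with the edges from S into K removed. *)
Definition K_fair (G : rel V) (S : V) (T : {set V}) (K : {set V}) : Prop :=
  d_separated (cut_S_into_K (with_predictor G T) S K) (Some S) None
              [set Some k | k in K].

Definition causally_fair (G : rel V) (S : V) (T : {set V}) : Prop :=
  forall K : {set V}, S \notin K -> K_fair G S T K.

Definition fair_causal_features (G : rel V) (S Y : V) (T : {set V}) : Prop :=
  T \subset markov_blanket G Y /\ causally_fair G S T.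
End Causal.

(* Main.v *)
Require Import Defs.
From mathcomp Require Import all_boot.

Section Aux.
Variable U : finType.


Lemma path_some {e1 e2 : rel (option U)} (H : forall a b, b != None -> e2 a b -> e1 a b)
  (H2 : forall b, e2 None b = false) :
  forall p a, path e2 a p -> last a p != None -> path e1 a p.
Proof.
elim => [|y p IH] a //= /andP [hay hp] hl.
have yN : y != None.
  apply/negP => /eqP Ey; subst y.
  by case: p hp hl IH => [|c p'] /=; rewrite ?H2.
by rewrite H // IH.
Qed.

Lemma conn_sub {e1 e2 : rel (option U)} (H : forall a b, b != None -> e2 a b -> e1 a b)
  (H2 : forall b, e2 None b = false) a z :
  connect e2 a (Some z) -> connect e1 a (Some z).
Proof.
move/connectP=> [p hp hl]; apply/connectP; exists p => //.
by apply: (path_some H H2 _ _ hp); rewrite -hl.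
Qed.

Lemma ai_eq {e1 e2 : rel (option U)} (H : forall a b, b != None -> e1 a b = e2 a b)
  (H1 : forall b, e1 None b = false) (H2 : forall b, e2 None b = false)
  (Z : {set option U}) (hZ : None \notin Z) :
  forall s a, uniq (a :: s) -> last a s = None ->
  active_interior e1 Z a s = active_interior e2 Z a s.
Proof.
elim => [|v s IH] a //.
case: s IH => [|b s''] IH // hu hl.
have vN : v != None.
  apply/negP => /eqP Ev; subst v.
  move: hu; rewrite /= !inE => /and3P [_ /negP hn _]; apply: hn.
  by rewrite -hl /=; move: (mem_last b s''); rewrite inE.
have -> : active_interior e1 Z a [:: v, b & s''] =
  active_at e1 Z a v b && active_interior e1 Z v (b :: s'') by [].
have -> : active_interior e2 Z a [:: v, b & s''] =
  active_at e2 Z a v b && active_interior e2 Z v (b :: s'') by [].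
rewrite (IH v); last by [].
  congr andb; rewrite /active_at.
  rewrite !H //.
  case: ifP => // _.
  apply/existsP/existsP => -[z /andP [hz hd]]; exists z; rewrite hz /=;
  case: z hz hd => [z|] hz hd; rewrite ?(negPf hZ) // in hz *; rewrite /descendant in hd *.
    apply: (conn_sub _ H1 _ _ hd) => x y yN; by rewrite H.
  apply: (conn_sub _ H2 _ _ hd) => x y yN; by rewrite H.
by case/andP: hu.
Qed.
End Aux.

Theorem lemma1 (V : finType) (G : rel V) (S Y : V)
  (hSY : S != Y) (hG : acyclic G) (hMB : S \notin markov_blanket G Y)
  (D1 D2 : {set V}) (hD : D1 != D2)
  (h1 : fair_causal_features G S Y D1) (h2 : fair_causal_features G S Y D2) :
  fair_causal_features G S Y (D1 :|: D2).
Proof.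
case: h1 h2 => [s1 f1] [s2 f2]; split; first by rewrite subUset s1 s2.
move=> K hK p hl; apply/negP => /and3P [hp hu ha].
set e := cut_S_into_K (with_predictor G (D1 :|: D2)) S K in hp ha.
have eN : forall T b, cut_S_into_K (with_predictor G T) S K None b = false by [].
have eS : forall T T' a b, b != None ->
   cut_S_into_K (with_predictor G T) S K a b = cut_S_into_K (with_predictor G T') S K a b.
  by move=> T T' [a|] [b|].
have hZ : None \notin [set Some k | k in K] by apply/imsetP => -[].
case/lastP: p hl hp hu ha => [|q y] //=.
rewrite last_rcons => ->.
rewrite rcons_path => /andP [hq hlast] hu0 ha.
have : uniq (Some S :: rcons q None) by [].
rewrite -rcons_cons rcons_uniq => /andP [hNq huq].
have allS : all (fun v : option V => v != None) (Some S :: q).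
  by apply/allP => v hv; apply/negP => /eqP Ev; subst v; rewrite hv in hNq.
have : last (Some S) q \in Some S :: q by exact: mem_last.
case E: (last (Some S) q) hlast => [w|]; last by move=> _ hin; rewrite hin in hNq.
move=> hlast _.
have hw : w \in D1 :|: D2.
  by move: hlast; rewrite /adjacent /e /cut_S_into_K /= orbF => /andP [].
have key : forall T : {set V}, w \in T -> K_fair G S T K -> False.
  move=> T hT fT.
  have := fT (rcons q None); rewrite last_rcons => /(_ erefl) /negP; apply.
  apply/and3P; split.
  - rewrite rcons_path E; apply/andP; split; last first.
      rewrite /adjacent /cut_S_into_K /= hT /= orbF.
      by apply/negP => /andP [_ /existsP [k /andP [_ //]]].
    rewrite (eq_in_path (e' := adjacent e) _ allS) //.
    move=> a b ha' hb'; rewrite /adjacent (eS _ (D1 :|: D2) a b) //.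
    by rewrite (eS _ (D1 :|: D2) b a).
  - exact: hu0.
  - rewrite (@ai_eq _ _ _ (fun a b hb => eS T (D1 :|: D2) a b hb) (eN T) (eN _) _ hZ) //; try exact: hu0.
    exact: last_rcons.
move: hw; rewrite inE => /orP [hw|hw]; [exact: (key _ hw (f1 K hK)) | exact: (key _ hw (f2 K hK))].
Qed.
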